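(* Let $\theta \in [0,1]$. Let $\mathfrak{A}$ be a unital $C^*$-algebra with identity $I$, and let $U, V \in \mathfrak{A}$ be unitaries such that $UV = \exp(2\pi i\theta) VU$. Then there exist symmetries $R_1,R_2,R_3,R_4$ in $M_2(\mathfrak{A})$ such that $\exp(\pi i \theta)\begin{bmatrix} I & 0 \\ 0 & I\end{bmatrix} = R_1R_2R_3R_4$.
   Context: A symmetry is a self-adjoint unitary. $M_2(\mathfrak{A})$ denotes the $C^*$-algebra of $2\times 2$ matrices with entries in $\mathfrak{A}$. *)

(* Defs.v *)
From HB Require Import structures.
From mathcomp Require Import all_boot all_order all_algebra.
From mathcomp Require Import reals trigo.
From mathcomp.real_closed Require Import complex.
Set Implicit Arguments. Unset Strict Implicit. Unset Printing Implicit Defensive.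
Import Order.TTheory GRing.Theory Num.Theory.
Local Open Scope ring_scope.

Definition expi (R : realType) (t : R) : R[i] := Complex (cos t) (sin t).

Definition is_cstar_algebra (R : realType) (A : algType R[i])
    (star : A -> A) (nrm : A -> R) : Prop :=
  [/\ (forall x y : A, star (x + y) = star x + star y),
      (forall (c : R[i]) (x : A), star (c *: x) = conjc c *: star x),
      (forall x y : A, star (x * y) = star y * star x) &
      (forall x : A, star (star x) = x)] /\
  [/\ (forall x : A, nrm x = 0 -> x = 0),
      (forall x y : A, nrm (x + y) <= nrm x + nrm y),
      (forall (c : R[i]) (x : A), nrm (c *: x) = Normc.normc c * nrm x) &
      (forall x y : A, nrm (x * y) <= nrm x * nrm y)] /\
  ((forall u : nat -> A,
         (forall e : R, 0 < e -> exists N : nat, forall m n : nat,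
              (N <= m)%N -> (N <= n)%N -> nrm (u m - u n) < e) ->
         exists l : A, forall e : R, 0 < e -> exists N : nat, forall n : nat,
              (N <= n)%N -> nrm (u n - l) < e)
  /\ (forall x : A, nrm (star x * x) = nrm x ^+ 2)).

Definition unitary (R : realType) (A : algType R[i]) (star : A -> A) (u : A) :=
  star u * u = 1 /\ u * star u = 1.

Definition mx_star (A : Type) (star : A -> A) (M : 'M[A]_2) : 'M[A]_2 :=
  \matrix_(i < 2, j < 2) star (M j i).

Definition symmetry2 (R : realType) (A : algType R[i]) (star : A -> A)
    (S : 'M[A]_2) :=
  mx_star star S = S /\
  mx_star star S *m S = 1%:M /\ S *m mx_star star S = 1%:M.

(* Main.v *)
Require Import Defs.
From HB Require Import structures.
From mathcomp Require Import all_boot all_order all_algebra.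
From mathcomp Require Import reals trigo.
From mathcomp.real_closed Require Import complex.
Import Order.TTheory GRing.Theory Num.Theory.
Local Open Scope ring_scope.

Lemma expi_conj (R : realType) (t : R) : conjc (expi t) * expi t = 1.
Proof.
rewrite /expi /=; apply/eqP; rewrite eq_complex /=.
by rewrite mulNr opprK -!expr2 cos2Dsin2 mulrC mulNr subrr !eqxx.
Qed.

Lemma expi_sq (R : realType) (t : R) : expi t * expi t = expi (t + t).
Proof.
rewrite /expi /= cosD sinD; apply/eqP; rewrite eq_complex /=.
by rewrite !eqxx /= [sin t * cos t]mulrC eqxx.
Qed.

Section M.
Variable (R : realType) (A : algType R[i]).

Definition od (X Y : A) : 'M[A]_2 :=
  \matrix_(i, j) if i == j then 0 else if i == ord0 then X else Y.
Definition dg (X Y : A) : 'M[A]_2 :=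
  \matrix_(i, j) if i == j then (if i == ord0 then X else Y) else 0.

Ltac o2 i := case: i => [[|[|?]] ?] //=.

Lemma mul_od_od X Y Z W : od X Y *m od Z W = dg (X * W) (Y * Z).
Proof.
apply/matrixP => i j; rewrite !mxE big_ord_recl big_ord_recl big_ord0 !mxE.
o2 i; o2 j; rewrite ?mul0r ?mulr0 ?addr0 ?add0r //.
Qed.

Lemma mul_dg_od X Y Z W : dg X Y *m od Z W = od (X * Z) (Y * W).
Proof.
apply/matrixP => i j; rewrite !mxE big_ord_recl big_ord_recl big_ord0 !mxE.
o2 i; o2 j; rewrite ?mul0r ?mulr0 ?addr0 ?add0r //.
Qed.

Lemma dg_scal (c : A) : c%:M = dg c c.
Proof.
apply/matrixP => i j; rewrite !mxE; o2 i; o2 j.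
Qed.

Lemma star_od (star : A -> A) (h0 : star 0 = 0) X Y :
  mx_star star (od X Y) = od (star Y) (star X).
Proof. by apply/matrixP => i j; rewrite !mxE; o2 i; o2 j. Qed.

Lemma sym_od (star : A -> A) (h0 : star 0 = 0) (hss : forall x, star (star x) = x) X :
  star X * X = 1 -> X * star X = 1 -> symmetry2 star (od X (star X)).
Proof.
move=> h1 h2; rewrite /symmetry2 star_od // hss; split => //.
by rewrite mul_od_od h1 h2 dg_scal.
Qed.
End M.
Arguments od {R A}. Arguments dg {R A}.

Theorem proposition3p10 (R : realType) (theta : R)
    (A : algType R[i]) (star : A -> A) (nrm : A -> R)
    (hA : is_cstar_algebra star nrm)
    (htheta : 0 <= theta <= 1)
    (U V : A) (hU : unitary star U) (hV : unitary star V)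
    (hUV : U * V = expi (2 * pi * theta) *: (V * U)) :
  exists R1 R2 R3 R4 : 'M[A]_2,
    [/\ symmetry2 star R1, symmetry2 star R2, symmetry2 star R3,
        symmetry2 star R4 &
        (expi (pi * theta) *: (1 : A))%:M = R1 *m R2 *m R3 *m R4].
Proof.
case: hA => [[sD sZ sM sK] _].
have s0 : star 0 = 0.
  by apply: (@addrI _ (star 0)); rewrite -sD !addr0.
have s1 : star 1 = 1.
  have e : star 1 = star 1 * star (star 1) by rewrite sK mulr1.
  by rewrite e -sM mulr1 sK.
set l := expi (pi * theta).
have hl : conjc l * l = 1 by apply: expi_conj.
have hl' : l * conjc l = 1 by rewrite mulrC.
have hl2 : expi (2 * pi * theta) = l * l.
  by rewrite /l expi_sq; congr expi; rewrite -mulrA mulr2n mulrDl mul1r.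
clearbody l.
case: hU => hU1 hU2; case: hV => hV1 hV2.
exists (od U (star U)), (od 1 1), (od V (star V)),
  (od (l *: (V * U)) (conjc l *: (star U * star V))).
split.
- exact: (@sym_od R A).
- by have := @sym_od R A star s0 sK 1; rewrite s1; apply; rewrite mulr1.
- exact: (@sym_od R A).
- have -> : l *: (V * U) = star (conjc l *: (star U * star V)).
    by rewrite sZ sM !sK conjcK.
  have := @sym_od R A star s0 sK (star (conjc l *: (star U * star V))).
  rewrite sK; apply.
  + rewrite sZ sM !sK conjcK -scalerAl -scalerAr scalerA hl scale1r.
    by rewrite mulrA -[star U * star V * V]mulrA hV1 mulr1 hU1.
  + rewrite sZ sM !sK conjcK -scalerAl -scalerAr scalerA hl' scale1r.
    by rewrite mulrA -[V * U * star U]mulrA hU2 mulr1 hV2.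
rewrite mul_od_od !mulr1 mul_dg_od mul_od_od dg_scal; congr dg.
  rewrite -scalerAr hUV hl2 -scalerAl -scalerA.
  rewrite mulrA -[V * U * star U]mulrA hU2 mulr1 hV2.
  by rewrite !scalerA mulrA hl mul1r.
rewrite -scalerAr mulrA -[star U * star V * V]mulrA hV1 mulr1 hU1.
by [].
Qed.
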